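(* Suppose there exist $\kappa \in \mathbb{R}$ and a function $f:\mathbb{N}\to\mathbb{R}$ such that $\lambda_3(G) \le \kappa|V(G)| + f(|V(G)|)$ for every simple graph $G$ with at least $3$ vertices. If $\frac{f(n)}{n} \to 0$ as $n \to \infty$, then every simple graph $G$ with at least $3$ vertices satisfies \[ \lambda_3(G) \le \kappa |V(G)| - 1. \]
   Context: $\lambda_3(G)$ denotes the third largest eigenvalue (with multiplicity) of the adjacency matrix of $G$. *)

(* Defs.v *)
From HB Require Import structures.
From mathcomp Require Import all_boot all_order all_algebra.
From mathcomp Require Import all_classical all_reals all_analysis.
Set Implicit Arguments. Unset Strict Implicit. Unset Printing Implicit Defensive.
Import Order.TTheory GRing.Theory Num.Theory.
Local Open Scope ring_scope.

Definition simple_graph (n : nat) (e : rel 'I_n) : Prop :=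
  symmetric e /\ irreflexive e.

Definition adjmx (R : realType) (n : nat) (e : rel 'I_n) : 'M[R]_n :=
  \matrix_(i, j) (e i j)%:R.

(* The eigenvalues (with multiplicity) of a square real matrix, listed in
   non-increasing order, when its characteristic polynomial splits over R
   (which is always the case for a real symmetric matrix, e.g. an adjacency
   matrix); the list of roots with multiplicity is unique up to permutation,
   so the sorted list is well defined. Otherwise [::] (never used here). *)
Definition eigenvalues_desc (R : realType) (n : nat) (A : 'M[R]_n) : seq R :=
  match pselect (exists s : seq R, char_poly A = \prod_(x <- s) ('X - x%:P)) with
  | left H => sort (fun x y : R => y <= x) (proj1_sig (cid H))
  | right _ => [::]
  end.

Definition lambda_k (R : realType) (k : nat) (n : nat) (e : rel 'I_n) : R :=
  nth 0 (eigenvalues_desc (adjmx R e)) k.-1.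

Definition lambda3 (R : realType) (n : nat) (e : rel 'I_n) : R := lambda_k R 3 e.

(* Main.v *)
Require Import Defs.
From HB Require Import structures.
From mathcomp Require Import all_boot all_order all_algebra.
From mathcomp Require Import all_classical all_reals all_analysis.
From mathcomp Require Import complex.
From mathcomp Require mxtens.
From mathcomp Require Import ring lra.
Import Order.TTheory GRing.Theory Num.Theory numFieldNormedType.Exports.
Local Open Scope ring_scope.

Lemma char_poly_conj (F : fieldType) n (S B : 'M[F]_n) :
  S \in unitmx -> char_poly (invmx S *m B *m S) = char_poly B.
Proof.
move=> Su; rewrite /char_poly /char_poly_mx.
set S' := map_mx polyC S; set Si := map_mx polyC (invmx S).
have SiS : Si *m S' = 1%:M by rewrite /Si /S' -map_mxM mulVmx // map_mx1.
have -> : 'X%:M - map_mx polyC (invmx S *m B *m S) = Si *m ('X%:M - map_mx polyC B) *m S'.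
  rewrite !map_mxM mulmxBr mulmxBl; congr (_ - _).
  by rewrite mul_mx_scalar -scalemxAl SiS -mul_scalar_mx mulmx1.
have S'Si : S' *m Si = 1%:M by rewrite /Si /S' -map_mxM mulmxV // map_mx1.
by rewrite !det_mulmx mulrC mulrA -det_mulmx S'Si det1 mul1r.
Qed.

Lemma char_poly_diag (F : fieldType) n (w : 'rV[F]_n) :
  char_poly (diag_mx w) = \prod_(i < n) ('X - (w 0 i)%:P).
Proof.
rewrite char_poly_trig ?diag_mx_is_trig //; apply: eq_bigr => i _.
by rewrite mxE eqxx mulr1n.
Qed.

Local Open Scope complex_scope.

Lemma real_char (R : realType) n (B : 'M[R]_n) (S : 'M[R[i]]_n) (w : 'rV[R[i]]_n)
  (r : 'I_n -> R) : S \in unitmx ->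
  map_mx (real_complex R) B = invmx S *m diag_mx w *m S ->
  (forall k, w 0 k = (r k)%:C) ->
  char_poly B = \prod_(k < n) ('X - (r k)%:P).
Proof.
move=> Su eB wr; apply: (@map_poly_inj _ _ (real_complex R)).
rewrite map_char_poly eB char_poly_conj // char_poly_diag rmorph_prod.
apply: eq_bigr => k _. by rewrite wr rmorphB /= map_polyX map_polyC.
Qed.

Definition geR (R : realType) := fun x y : R => y <= x.

Lemma eig_eq (R : realType) n (B : 'M[R]_n) (r : 'I_n -> R) :
  char_poly B = \prod_(k < n) ('X - (r k)%:P) ->
  eigenvalues_desc B = sort (@geR R) [seq r k | k <- enum 'I_n].
Proof.
move=> cB; rewrite /eigenvalues_desc; case: pselect => [H|H]; last first.
  exfalso; apply: H; exists [seq r k | k <- enum 'I_n].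
  by rewrite cB big_map big_enum.
case: (cid H) => s /= hs.
apply/perm_sortP.
- by move=> x y; apply: le_total.
- by move=> x y z; rewrite /geR => h1 h2; apply: le_trans h2 h1.
- by move=> x y; rewrite /geR => /andP[h1 h2]; apply/eqP; rewrite eq_le h2 h1.
apply: prod_XsubC_eq; rewrite -hs cB big_map big_enum //.
Qed.

Lemma sym_spectral (R : realType) n (A : 'M[R]_n) : A^T = A ->
  let Ac := map_mx (real_complex R) A in
  Ac = invmx (spectralmx Ac) *m diag_mx (spectral_diag Ac) *m spectralmx Ac /\
  forall k, spectral_diag Ac 0 k = (complex.Re (spectral_diag Ac 0 k))%:C.
Proof.
move=> AT Ac.
have herm : Ac \is hermsymmx.
  apply/is_hermitianmxP; rewrite expr0 scale1r; apply/matrixP => i j.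
  rewrite !mxE -[in LHS]AT mxE /=.
  by apply/esym/CrealP; apply/complex_realP; exists (A j i).
split; first by apply/orthomx_spectralP; apply: hermitian_normalmx.
move=> k; have := hermitian_spectral_diag_real herm.
move=> /mxOverP /(_ 0 k) hk; by rewrite RRe_real.
Qed.

Lemma geR_total (R : realType) : total (@geR R).
Proof. by move=> x y; apply: le_total. Qed.
Lemma geR_trans (R : realType) : transitive (@geR R).
Proof. by move=> x y z; rewrite /geR => h1 h2; apply: le_trans h2 h1. Qed.
Lemma geR_refl (R : realType) : reflexive (@geR R).
Proof. by move=> x; rewrite /geR. Qed.

Lemma count_sort (R : realType) (P : pred R) (s : seq R) :
  count P (sort (@geR R) s) = count P s.
Proof.
have h : perm_eq (sort (@geR R) s) s by rewrite perm_sort perm_refl.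
by move/permP: h.
Qed.

Lemma nth_sort_ge (R : realType) (s : seq R) k (x : R) :
  (k < count (fun y => (x <= y)%R) s)%N -> x <= nth 0 (sort (@geR R) s) k.
Proof.
rewrite -count_sort; set s' := sort _ s.
have ss : sorted (@geR R) s' by apply: sort_sorted; apply: geR_total.
move=> hk; rewrite leNgt; apply/negP => hlt.
have hsz : (k < size s')%N by apply: leq_trans hk (count_size _ _).
have : count (fun y => x <= y) (drop k s') = 0%N.
  apply/eqP; rewrite -leqn0 leqNgt -has_count; apply/negP => /(has_nthP 0) [j hj].
  rewrite nth_drop => hx.
  rewrite size_drop in hj.
  have : geR R (nth 0 s' k) (nth 0 s' (k + j)).
    apply: (sorted_leq_nth (@geR_trans R) (@geR_refl R)) => //; rewrite ?inE.
    - by rewrite -ltn_subRL.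
    - by rewrite leq_addr.



  rewrite /geR => h; have := le_lt_trans h hlt; by rewrite ltNge hx.
move=> h0; rewrite -(cat_take_drop k s') count_cat h0 addn0 in hk.
have := count_size (fun y => x <= y) (take k s').
rewrite size_take hsz => h; by have := leq_trans hk h; rewrite ltnn.
Qed.

Lemma count_nth_sort (R : realType) (s : seq R) k : (k < size s)%N ->
  (k < count (fun y => (nth 0 (sort (@geR R) s) k <= y)%R) s)%N.
Proof.
rewrite -count_sort -(size_sort (@geR R)); set s' := sort _ s => hk.
have ss : sorted (@geR R) s' by apply: sort_sorted; apply: geR_total.
rewrite -[X in count _ X](cat_take_drop k.+1 s') count_cat.
have : all (fun y => nth 0 s' k <= y) (take k.+1 s').
  apply/(all_nthP 0) => j; rewrite size_takel // => hj.
  rewrite nth_take //.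
  apply: (sorted_leq_nth (@geR_trans R) (@geR_refl R)) => //; rewrite ?inE.
  by apply: leq_trans hj hk.
rewrite all_count => /eqP ->; rewrite size_takel //.
by apply: leq_trans (leq_addr _ _).
Qed.
Definition uix n t (k : 'I_(n * t)) : 'I_n * 'I_t := mxtens.mxtens_unindex k.
Definition ix n t (p : 'I_n * 'I_t) : 'I_(n * t) := mxtens.mxtens_index p.
Arguments uix {n t}.
Arguments ix {n t}.

Definition blowup n t (e : rel 'I_n) : rel 'I_(n * t) :=
  fun k l => (k != l) && (((uix k).1 == (uix l).1) || e (uix k).1 (uix l).1).
Arguments blowup {n} t e.

Lemma blowup_simple n t (e : rel 'I_n) : simple_graph e -> simple_graph (blowup t e).
Proof.
move=> [es ei]; split.
- move=> k l; rewrite /blowup eq_sym; congr (_ && _); congr (_ || _).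
  by rewrite eq_sym. by rewrite es.
- by move=> k; rewrite /blowup eqxx.
Qed.

Lemma ix_eq n t (p q : 'I_n * 'I_t) : (ix p == ix q) = (p == q).
Proof. by apply: (can_eq (@mxtens.mxtens_indexK n t)). Qed.

Lemma adj_blowup (R : realType) n t (e : rel 'I_n) : simple_graph e ->
  adjmx R (blowup t e) =
  mxtens.tensmx (adjmx R e + 1%:M) (const_mx 1 : 'M[R]_t) - 1%:M.
Proof.
move=> [es ei]; apply/matrixP => k l.
case: (mxtens.mxtens_indexP k) => i j; case: (mxtens.mxtens_indexP l) => i' j'.
rewrite !mxE /blowup /uix !mxtens.mxtens_indexK /= mulr1.
rewrite (@ix_eq n t (i, j) (i', j')) xpair_eqE.
have [->|hii] := eqVneq i i'.
  rewrite ei /= add0r; case: (j == j') => /=; by rewrite ?subrr ?subr0.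
by rewrite /= subr0 addr0.
Qed.

Lemma tens11 (F : comNzRingType) m n :
  mxtens.tensmx (1%:M : 'M[F]_m) (1%:M : 'M[F]_n) = 1%:M.
Proof.
apply/matrixP => k l.
case: (mxtens.mxtens_indexP k) => i j; case: (mxtens.mxtens_indexP l) => i' j'.
rewrite !mxE !mxtens.mxtens_indexK /= (@ix_eq m n (i, j) (i', j')) xpair_eqE.
by case: (i == i'); case: (j == j'); rewrite /= ?mulr1 ?mulr0 ?mul0r.
Qed.

Lemma J_eig (R : realType) t : (0 < t)%N ->
  let Jc := map_mx (real_complex R) (const_mx 1 : 'M[R]_t) in
  exists j0, spectral_diag Jc 0 j0 = t%:R.
Proof.
move=> t0 Jc.
have JT : (const_mx 1 : 'M[R]_t)^T = const_mx 1 by apply/matrixP => i j; rewrite !mxE.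
have [eJ _] := @sym_spectral R t _ JT; rewrite -/Jc in eJ.
set P := spectralmx Jc in eJ; set d := spectral_diag Jc in eJ *.
have Pu : P \in unitmx by apply: spectral_unit.
have eD : diag_mx d = P *m Jc *m invmx P.
  by rewrite eJ !mulmxA mulmxK // mulmxV // mul1mx.
have JJ : Jc *m Jc = t%:R *: Jc.
  apply/matrixP => i j; rewrite !mxE.
  under eq_bigr do rewrite !mxE mulr1.
  by rewrite sumr_const card_ord mulr1.
have DD : diag_mx d *m diag_mx d = t%:R *: diag_mx d.
  rewrite eD -!mulmxA (mulmxA (invmx P)) mulVmx // mul1mx.
  by rewrite (mulmxA Jc Jc) JJ -scalemxAl -scalemxAr.
have hd : forall j, d 0 j = 0 \/ d 0 j = t%:R.
  move=> j; have /matrixP /(_ j j) := DD.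
  rewrite mul_diag_mx !mxE eqxx mulr1n => h.
  have : d 0 j * (d 0 j - t%:R) = 0 by rewrite mulrBr h mulrC subrr.
  move/eqP; rewrite mulf_eq0 subr_eq0 => /orP [/eqP|/eqP]; by [left|right].
have tr : \sum_j d 0 j = t%:R.
  rewrite -mxtrace_diag eD mxtrace_mulC mulmxA mulVmx // mul1mx.
  rewrite /mxtrace; under eq_bigr do rewrite !mxE.
  by rewrite sumr_const card_ord.
case: (pselect (exists j0, d 0 j0 = t%:R)) => // hn; exfalso.
have : \sum_j d 0 j = 0.
  apply: big1 => j _; case: (hd j) => // h; exfalso; apply: hn; by exists j.
rewrite tr => /eqP; rewrite pnatr_eq0 => /eqP ht; by rewrite ht in t0.
Qed.

Lemma adj_sym (R : realType) n (e : rel 'I_n) : simple_graph e ->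
  (adjmx R e)^T = adjmx R e.
Proof. by move=> [es _]; apply/matrixP => i j; rewrite !mxE es. Qed.

Lemma blow_eig (R : realType) n t (e : rel 'I_n) : simple_graph e -> (0 < t)%N ->
  let Ac := map_mx (real_complex R) (adjmx R e) in
  let Jc := map_mx (real_complex R) (const_mx 1 : 'M[R]_t) in
  eigenvalues_desc (adjmx R (blowup t e)) =
  sort (@geR R) [seq (complex.Re (spectral_diag Ac 0 (uix k).1) + 1)
                     * complex.Re (spectral_diag Jc 0 (uix k).2) - 1 | k <- enum 'I_(n*t)].
Proof.
move=> sg t0 Ac Jc.
have JT : (const_mx 1 : 'M[R]_t)^T = const_mx 1 by apply/matrixP => i j; rewrite !mxE.
have [eA dreal] := @sym_spectral R n _ (@adj_sym R n e sg); rewrite -/Ac in eA dreal.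
have [eJ ereal] := @sym_spectral R t _ JT; rewrite -/Jc in eJ ereal.
set P := spectralmx Ac in eA; set d := spectral_diag Ac in eA dreal *.
set Q := spectralmx Jc in eJ; set f := spectral_diag Jc in eJ ereal *.
have Pu : P \in unitmx by apply: spectral_unit.
have Qu : Q \in unitmx by apply: spectral_unit.
set S := mxtens.tensmx P Q; set Si := mxtens.tensmx (invmx P) (invmx Q).
have SiS : Si *m S = 1%:M by rewrite mxtens.tensmx_mul !mulVmx // tens11.
have [_ Su] := mulmx1_unit SiS.
have invS : invmx S = Si by rewrite -[Si]mulmx1 -(mulmxV Su) mulmxA SiS mul1mx.
apply: eig_eq.
apply: (@real_char R _ _ S (\row_k ((d 0 (uix k).1 + 1) * f 0 (uix k).2 - 1))) => //.
- rewrite adj_blowup // map_mxB map_mx1 mxtens.map_mxT map_mxD map_mx1 -/Ac -/Jc.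
  have e1 : Ac + 1%:M = invmx P *m (diag_mx d + 1%:M) *m P.
    by rewrite mulmxDr mulmxDl -eA mulmx1 mulVmx.
  rewrite e1 [in mxtens.tensmx _ Jc]eJ -!mxtens.tensmx_mul -/S -/Si invS.
  rewrite -[X in _ - X]SiS -[in X in _ - X](mul1mx S) -(mulmx1 Si) -mulmxA.
  rewrite -mulmxBr -mulmxBl mulmxA; congr (_ *m _ *m _).
  apply/matrixP => k l.
  case: (mxtens.mxtens_indexP k) => i j; case: (mxtens.mxtens_indexP l) => i' j'.
  rewrite !mxE /uix !mxtens.mxtens_indexK /= (@ix_eq n t (i, j) (i', j')) xpair_eqE.
  have [->|hii] := eqVneq i i'; have [->|hjj] := eqVneq j j';
    by rewrite /= ?mulr1n ?mulr0n ?mulr0 ?mul0r ?subr0 ?addr0 /= ?mulr0n ?mul0r.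
- move=> k; rewrite mxE dreal ereal.
  by rewrite -[1]/(real_complex R 1) -rmorphD -rmorphM -rmorphB.
Qed.

Lemma cnt (T : finType) (P : pred T) : count P (enum T) = #|P|.
Proof. by rewrite enumT cardE /enum_mem size_filter. Qed.

Lemma count_inj m1 m2 (h : 'I_m1 -> 'I_m2) (P1 : pred 'I_m1) (P2 : pred 'I_m2) :
  injective h -> (forall i, P1 i -> P2 (h i)) ->
  (count P1 (enum 'I_m1) <= count P2 (enum 'I_m2))%N.
Proof.
move=> hi hP; rewrite !cnt -(card_imset P1 hi); apply: subset_leq_card.
by apply/fintype.subsetP => y /finset.imsetP [x Px ->]; apply: hP.
Qed.

Lemma eigG (R : realType) n (e : rel 'I_n) : simple_graph e ->
  let Ac := map_mx (real_complex R) (adjmx R e) in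
  eigenvalues_desc (adjmx R e) =
  sort (@geR R) [seq complex.Re (spectral_diag Ac 0 i) | i <- enum 'I_n].
Proof.
move=> sg Ac.
have [eA dreal] := @sym_spectral R n _ (@adj_sym R n e sg); rewrite -/Ac in eA dreal.
apply: eig_eq; apply: (@real_char R n _ _ _ (fun i => complex.Re (spectral_diag Ac 0 i)) (spectral_unit Ac) eA) => k; exact: dreal.
Qed.

Lemma blow_bound (R : realType) n t (e : rel 'I_n) : simple_graph e ->
  (3 <= n)%N -> (0 < t)%N ->
  t%:R * (lambda3 R e + 1) - 1 <= lambda3 R (blowup t e).
Proof.
move=> sg n3 t0.
have JT : (const_mx 1 : 'M[R]_t)^T = const_mx 1 by apply/matrixP => i j; rewrite !mxE.
have [_ ereal] := @sym_spectral R t _ JT.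
have [j0 hj0] := @J_eig R t t0.
rewrite /lambda3 /lambda_k /= (@blow_eig R n t e sg t0) (@eigG R n e sg).
set rd := fun i => complex.Re _.
set Jc := map_mx _ (const_mx 1) in ereal hj0 *.
set f := spectral_diag Jc in ereal hj0 *.
have fj0 : complex.Re (f 0 j0) = t%:R.
  apply: (@complexI R); rewrite -ereal hj0.
  by rewrite -(rmorph_nat (real_complex R)).
set L := nth 0 _ 2.
apply: nth_sort_ge.
have c1 : (2 < count (fun y => (L <= y)%R) [seq rd i | i <- enum 'I_n])%N.
  by apply: count_nth_sort; rewrite size_map size_enum_ord.
apply: leq_trans c1 _; rewrite [X in (X <= _)%N]count_map [X in (_ <= X)%N]count_map.
apply: (@count_inj n (n * t) (fun i => ix (i, j0))).
  by move=> a b /(can_inj (@mxtens.mxtens_indexK n t)) [].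
move=> i hL.
change (t%:R * (L + 1) - 1 <= (rd (uix (ix (i,j0))).1 + 1) * complex.Re (f 0 (uix (ix (i,j0))).2) - 1).
rewrite /uix /ix mxtens.mxtens_indexK /= fj0.
rewrite lerD2r [X in _ <= X]mulrC ler_wpM2l ?ler0n // lerD2r; exact: hL.
Qed.

Local Close Scope complex_scope.
Local Open Scope classical_set_scope.
Local Open Scope ring_scope.

Theorem lemma4p3 (R : realType) (kappa : R) (f : nat -> R) :
  (forall (n : nat) (e : rel 'I_n), simple_graph e -> (3 <= n)%N ->
     lambda3 R e <= kappa * n%:R + f n) ->
  (fun n : nat => f n / n%:R) @ \oo --> (0 : R) ->
  forall (n : nat) (e : rel 'I_n), simple_graph e -> (3 <= n)%N ->
    lambda3 R e <= kappa * n%:R - 1.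
Proof.
move=> H hf n e sg n3.
set L := lambda3 R e.
have key : forall t, (0 < t)%N ->
    t%:R * (L + 1) - 1 <= kappa * (n%:R * t%:R) + f (n * t)%N.
  move=> t t0; apply: le_trans (@blow_bound R n t e sg n3 t0) _.
  rewrite -natrM; apply: H; first exact: blowup_simple.
  by apply: leq_trans n3 (leq_pmulr _ t0).
rewrite leNgt; apply/negP => hlt.
set d := L + 1 - kappa * n%:R.
have d0 : 0 < d by rewrite /d; lra.
have n0 : 0 < n%:R :> R by rewrite ltr0n; apply: leq_trans n3.
set eps := d / (2 * n%:R).
have eps0 : 0 < eps by apply: divr_gt0 => //; rewrite mulr_gt0.
have epsn : eps * (2 * n%:R) = d by rewrite /eps mulfVK // gt_eqF // mulr_gt0 // ltr0n.
move/cvgr0Pnorm_lt: hf => /(_ eps eps0) [N _ HN].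
set b := Num.Def.archi_bound (2 / d).
have hb : 2 / d < b%:R by apply: archi_boundP; apply: divr_ge0 => //; apply: ltW.
set t := (N + b).+1.
have t0 : (0 < t)%N by [].
have hk := key t t0.
have hN : (N <= n * t)%N.
  apply: leq_trans (leq_pmull _ _); first by rewrite /t -addnS leq_addr.
  by apply: leq_trans n3.
have := HN (n * t)%N hN; rewrite /= natrM => hA.
set T := t%:R : R in hk hA *.
have T0 : 0 < T by rewrite ltr0n.
have hbT : 2 / d < T.
  apply: lt_le_trans hb _; rewrite ler_nat /t; apply: leq_trans (leqnSn _).
  by rewrite leq_addl.
have dT : 2 < d * T by rewrite -ltr_pdivrMl // mulrC.
set F := f (n * t)%N in hk hA.
have nT0 : 0 < n%:R * T by rewrite mulr_gt0.
have hF : F <= `|F / (n%:R * T)| * (n%:R * T).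
  have nT0' : n%:R * T != 0 by rewrite gt_eqF.
  rewrite -{1}(mulfVK nT0' F); apply: ler_wpM2r; [exact: ltW nT0 | exact: Num.Theory.ler_norm].
have hF2 : `|F / (n%:R * T)| * (n%:R * T) < eps * (n%:R * T).
  by rewrite ltr_pM2r.
have : eps * (n%:R * T) * 2 = d * T.
  by rewrite -epsn; ring.
have : T * (L + 1) - 1 - kappa * (n%:R * T) = d * T - 1.
  by rewrite /d; ring.
lra.
Qed.
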